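(* Let $\alpha,\beta\in\mathbb{R}$. The sequence $\{k^2+\alpha k+\beta\}_{k=0}^{\infty}$ is a classical multiplier sequence if and only if $\alpha\ge -1$ and $0\le\beta\le\frac14(\alpha+1)^2$.
   Context: A real sequence $\{\gamma_k\}_{k=0}^{\infty}$ is a classical multiplier sequence if for every real polynomial $\sum_{k=0}^n a_kx^k$ having only real zeros, the polynomial $\sum_{k=0}^n a_k\gamma_kx^k$ also has only real zeros. *)

(* Defs.v *)
From mathcomp Require Import all_boot all_order all_algebra.
From mathcomp Require Import complex.
From mathcomp Require Import Rstruct.
From Stdlib Require Import Rdefinitions.
Set Implicit Arguments. Unset Strict Implicit. Unset Printing Implicit Defensive.
Import Order.TTheory GRing.Theory Num.Theory.
Local Open Scope ring_scope.
Local Open Scope complex_scope.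
Local Open Scope ring_scope.

(* Convention (standard in this literature): the zero polynomial counts as
   having only real zeros. *)
Definition only_real_zeros (p : {poly R}) : Prop :=
  p = 0 \/ forall z : complex R, root (map_poly (fun x : R => x%:C) p) z -> Im z = 0.

Definition apply_mult (gamma : nat -> R) (p : {poly R}) : {poly R} :=
  \poly_(k < size p) (p`_k * gamma k).

Definition classical_multiplier_sequence (gamma : nat -> R) : Prop :=
  forall p : {poly R}, only_real_zeros p -> only_real_zeros (apply_mult gamma p).

(* Main.v *)
Require Import Defs.
From mathcomp Require Import all_boot all_order all_algebra.
From mathcomp Require Import complex Rstruct.
From Stdlib Require Import Rdefinitions.
From mathcomp Require Import ring lra.
Import Order.TTheory GRing.Theory Num.Theory.
Local Open Scope ring_scope.

Section Helpers.
Local Open Scope complex_scope.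
Local Open Scope ring_scope.

Local Notation C := (complex R).
Local Notation cRe := (@complex.Re R).
Local Notation cIm := (@complex.Im R).

Lemma cnz (h : C) : h != 0 -> 0 < cRe h ^+ 2 + cIm h ^+ 2.
Proof.
case: h => h1 h2 /= hn; rewrite ltNge; apply/negP => hle.
have e1 : h1 = 0 by nra.
have e2 : h2 = 0 by nra.
by move: hn; rewrite e1 e2 eqxx.
Qed.

Lemma key_id (mu h k d : C) :
  cRe (conjc mu * (h + d * k) * conjc (d * h)) =
  (cRe h ^+ 2 + cIm h ^+ 2) * cRe (mu * d) +
  (cRe d ^+ 2 + cIm d ^+ 2) * cRe (conjc mu * k * conjc h).
Proof. by case: mu h k d => [m1 m2] [h1 h2] [k1 k2] [d1 d2] /=; ring. Qed.

Lemma reB (mu w r : C) : cRe (mu * (w - r)) = cRe (mu * w) - cRe (mu * r).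
Proof. by case: mu w r => [m1 m2] [w1 w2] [r1 r2] /=; ring. Qed.

Lemma step_prod (mu w : C) (c : R) (s : seq C) :
  0 < cRe mu -> c < cRe (mu * w) -> all (fun r => cRe (mu * r) <= c) s ->
  (\prod_(r <- s) ('X - r%:P)).[w] != 0 /\
  0 <= cRe (conjc mu * (\prod_(r <- s) ('X - r%:P))^`().[w]
            * conjc ((\prod_(r <- s) ('X - r%:P)).[w])) /\
  (s = [::] \/ 0 < cRe (conjc mu * (\prod_(r <- s) ('X - r%:P))^`().[w]
            * conjc ((\prod_(r <- s) ('X - r%:P)).[w]))).
Proof.
move=> hmu hw; elim: s => [|r s IH].
  rewrite big_nil derivC hornerC horner0 oner_eq0; split => //; split; last by left.
  rewrite mulr0 mul0r /=; lra.
rewrite /= => /andP [hr hs]; have [hG [hE _]] := IH hs.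
rewrite big_cons derivM derivXsubC mul1r !hornerE.
set h := _.[w] in hG hE *; set k := _.[w] in hE *.
have hd : 0 < cRe (mu * (w - r)).
  rewrite reB; lra.
have hd2 : w - r != 0.
  apply/eqP => e; move: hd; rewrite e mulr0 /=; lra.
split; first by rewrite mulf_neq0.
have hh := @cnz h hG.
have key : cRe (conjc mu * (h + (w - r) * k) * conjc ((w - r) * h)) =
  (cRe h ^+ 2 + cIm h ^+ 2) * cRe (mu * (w - r)) +
  (cRe (w - r) ^+ 2 + cIm (w - r) ^+ 2) * cRe (conjc mu * k * conjc h).
  exact: key_id.
rewrite key; have hd3 : 0 <= cRe (w - r) ^+ 2 + cIm (w - r) ^+ 2.
  by rewrite addr_ge0 // sqr_ge0.
have := mulr_gt0 hh hd; have := mulr_ge0 hd3 hE.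
move: (_ * _) (_ * _) => A B hA hB; split; [lra | right; lra].
Qed.

Lemma neg_id (mu g : C) (u : R) :
  cRe (conjc mu * (- (u%:C * g)) * conjc g) = - (u * ((cRe g ^+ 2 + cIm g ^+ 2) * cRe mu)).
Proof. by case: mu g => [m1 m2] [g1 g2] /=; ring. Qed.

Lemma step (mu : C) (c u : R) (F : {poly C}) :
  0 < cRe mu -> 0 <= u -> F != 0 ->
  (forall X, root F X -> cRe (mu * X) <= c) ->
  F^`() + u%:C *: F != 0 ->
  forall w, root (F^`() + u%:C *: F) w -> cRe (mu * w) <= c.
Proof.
move=> hmu hu hF hK hF1 w hw; rewrite leNgt; apply/negP => hc.
have [s hs] := closed_field_poly_normal F.
set G := \prod_(z <- s) _ in hs.
have hl : lead_coef F != 0 by rewrite lead_coef_eq0.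
have hall : all (fun r => cRe (mu * r) <= c) s.
  apply/allP => r hr; apply: hK; rewrite hs rootZ // root_prod_XsubC //.
have [hG [_ hE]] := @step_prod mu w c s hmu hc hall.
have e1 : F^`() + u%:C *: F = lead_coef F *: (G^`() + u%:C *: G).
  by rewrite {1 2}hs derivZ scalerDr !scalerA mulrC.
have hw' : G^`().[w] + u%:C * G.[w] = 0.
  by move: hw; rewrite /root e1 hornerZ mulf_eq0 (negbTE hl) /= hornerD hornerZ => /eqP.
case: hE => [es | hpos].
  move: hw' hF1; rewrite e1 /G es big_nil derivC horner0 hornerC add0r mulr1 => ->.
  by rewrite scale0r addr0 scaler0 eqxx.
have e2 : G^`().[w] = - (u%:C * G.[w]) by apply/eqP; rewrite -addr_eq0 hw'.
move: hpos; rewrite e2 neg_id.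
have := @cnz _ hG; move: (_ + _) => A hA.
have := mulr_gt0 hA hmu; move: (A * _) => B hB.
have := mulr_ge0 hu (ltW hB); lra.
Qed.


Lemma comp_deriv (p : {poly C}) (z : C) :
  (p \Po (z *: 'X + z%:P))^`() = z *: (p^`() \Po (z *: 'X + z%:P)).
Proof.
rewrite deriv_comp derivD derivZ derivX derivC addr0 mulrC.
by rewrite -scalerAl mul1r.
Qed.

Lemma Q2_eval (p : {poly C}) (z : C) (u v : R) :
  let Q := p \Po (z *: 'X + z%:P) in
  let Q1 := Q^`() + v%:C *: Q in
  let Q2 := Q1^`() + u%:C *: Q1 in
  Q2.[0] = z ^+ 2 * p^`()^`().[z] + (u + v)%:C * z * p^`().[z] + (u * v)%:C * p.[z].
Proof.
move=> Q Q1 Q2; rewrite /Q2 /Q1 /Q derivD derivZ !comp_deriv derivZ comp_deriv.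
rewrite !hornerE !horner_comp !hornerE.
rewrite rmorphD rmorphM /=.
ring.
Qed.

Lemma core (p : {poly C}) (z mu : C) (c u v : R) :
  0 < cRe mu -> c < 0 -> 0 <= u -> 0 <= v ->
  (forall X, root (p \Po (z *: 'X + z%:P)) X -> cRe (mu * X) <= c) ->
  let Q := p \Po (z *: 'X + z%:P) in
  let Q1 := Q^`() + v%:C *: Q in
  let Q2 := Q1^`() + u%:C *: Q1 in
  Q2 != 0 -> Q2.[0] != 0.
Proof.
move=> hmu hc hu hv hK Q Q1 Q2 hQ2.
have h0 : cRe (mu * 0) = 0 by rewrite mulr0.
have hQ : Q != 0.
  apply/eqP => e; have := hK 0; rewrite -/Q e root0 h0 => /(_ isT); lra.
have hQ1 : Q1 != 0.
  by apply: contraNneq hQ2 => e; rewrite /Q2 e derivC scaler0 addr0.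
have hK1 := @step mu c v Q hmu hv hQ hK hQ1.
have hK2 := @step mu c u Q1 hmu hu hQ1 hK1 hQ2.
apply/negP => h; have := hK2 0 h; rewrite h0; lra.
Qed.

Lemma coef_am (g : nat -> R) (p : {poly R}) k : (apply_mult g p)`_k = p`_k * g k.
Proof.
rewrite /apply_mult coef_poly; case: ltnP => // h.
by rewrite nth_default // mul0r.
Qed.

Lemma am_formula (al be : R) (p : {poly R}) :
  apply_mult (fun k : nat => k%:R ^+ 2 + al * k%:R + be) p =
  'X^2 * p^`()^`() + (al + 1) *: ('X * p^`()) + be *: p.
Proof.
apply/polyP => k; rewrite coef_am !coefD !coefZ coefXnM coefXM !coef_deriv.
case: k => [|[|k]] /=.
- ring.
- rewrite mulr1n; ring.
- rewrite !subSS subn0.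
  ring.
Qed.


Lemma Im0 (w : C) : 'Im w = 0 <-> cIm w = 0.
Proof. rewrite -complexIm; split => [[]|->] //. Qed.

Lemma nz_step (F : {poly C}) (c : C) : F != 0 -> c != 0 -> F^`() + c *: F != 0.
Proof.
move=> hF hc; have hs : size (c *: F) = size F by rewrite size_scale.
rewrite -size_poly_eq0 addrC size_polyDl hs ?size_poly_eq0 //.
exact: lt_size_deriv.
Qed.

Lemma size_r (z : C) : z != 0 -> size (z *: 'X + z%:P) = 2.
Proof.
move=> hz; rewrite (_ : z *: 'X + z%:P = z *: ('X + 1%:P)).
  by rewrite size_scale // size_XaddC.
by rewrite scalerDr polyC1 alg_polyC.
Qed.

Lemma map_eval (p : {poly R}) (a be : R) (z : C) :
  (map_poly (fun x : R => x%:C) ('X^2 * p^`()^`() + a *: ('X * p^`()) + be *: p)).[z] =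
  z ^+ 2 * (map_poly (fun x : R => x%:C) p)^`()^`().[z]
  + a%:C * z * (map_poly (fun x : R => x%:C) p)^`().[z]
  + be%:C * (map_poly (fun x : R => x%:C) p).[z].
Proof.
have -> : (fun x : R => x%:C) = real_complex R by [].
rewrite !deriv_map !rmorphD !rmorphM /= !map_polyZ /= ?rmorphM ?map_polyXn ?map_polyX ?rmorphXn /= ?map_polyX !hornerE.
by rewrite expr2.
Qed.

Lemma im_lin (z X : C) : cIm (z * X + z) = cRe z * cIm X + cIm z * cRe X + cIm z.
Proof. by case: z X => [x y] [X1 X2]. Qed.

Lemma mapC_deriv (p : {poly R}) :
  (map_poly (fun x : R => x%:C) p)^`() = map_poly (fun x : R => x%:C) p^`().
Proof. by have -> : (fun x : R => x%:C) = real_complex R by []; rewrite deriv_map. Qed.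

Lemma mapC_eq0 (p : {poly R}) : (map_poly (fun x : R => x%:C) p == 0) = (p == 0).
Proof. by have -> : (fun x : R => x%:C) = real_complex R by []; rewrite map_poly_eq0. Qed.

Lemma c_nz (x : R) : x != 0 -> x%:C != 0.
Proof. by move=> h; apply/eqP => -[e]; move: h; rewrite e eqxx. Qed.

Lemma if_dir (a be : R) (p : {poly R}) : 0 <= a -> 0 <= be -> 4%:R * be <= a ^+ 2 ->
  only_real_zeros p ->
  only_real_zeros ('X^2 * p^`()^`() + a *: ('X * p^`()) + be *: p).
Proof.
move=> ha hb hd hp.
set q := _ + _ + _.
case: (eqVneq q 0) => [->|hq]; [by left | right].
case: hp => [p0|hp].
  by move: hq; rewrite /q p0 !deriv0 !mulr0 !scaler0 !addr0 eqxx.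
move=> z hz; apply/Im0.
have [//|hy] := eqVneq (cIm z) 0; exfalso.
set pc := map_poly (fun x : R => x%:C) p in hp.
have hz0 : z != 0 by apply: contraNneq hy => ->.
set r := z *: 'X + z%:P.
have hr : size r = 2 by exact: size_r.
have [mu [c [hmu [hc hK]]]] : exists mu c, 0 < cRe mu /\ c < 0 /\
    forall X, root (pc \Po r) X -> cRe (mu * X) <= c.
  have hI : forall X, root (pc \Po r) X -> cIm (z * X + z) = 0.
    move=> X; rewrite /root horner_comp /r !hornerE => hX.
    by apply/Im0; apply: hp.
  have hI' : forall X, root (pc \Po r) X ->
      cRe z * cIm X + cIm z * cRe X + cIm z = 0.
    by move=> X /hI; rewrite im_lin.
  have re_mu : forall (a b : R) (X : C), cRe ((a +i* b) * X) = a * cRe X - b * cIm X.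
    by move=> a' b' [X1 X2].
  case: (ltgtP (cIm z) 0) => hy'.
  - exists ((- cIm z) +i* cRe z), (cIm z); split; first by rewrite /=; lra.
    split => // X /hI' e.
    rewrite re_mu; nra.
  - exists (cIm z +i* (- cRe z)), (- cIm z); split => //; split; first lra.
    move=> X /hI' e; rewrite re_mu; nra.
  - by move: hy; rewrite hy' eqxx.
have hp0 : p != 0.
  by apply: contraNneq hq => e; rewrite /q e !deriv0 !mulr0 !scaler0 !addr0 eqxx.
have hpc0 : pc != 0 by rewrite /pc mapC_eq0.
suff [u [v [hu [hv [huv [hUV hQ2]]]]]] : exists u v : R,
    0 <= u /\ 0 <= v /\ u + v = a /\ u * v = be /\
    let Q := pc \Po r in let Q1 := Q^`() + v%:C *: Q in (Q1^`() + u%:C *: Q1) != 0.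
  have := @core pc z mu c u v hmu hc hu hv hK hQ2.
  by rewrite Q2_eval huv hUV -map_eval (eqP hz) eqxx.
have hQ : pc \Po r != 0 by rewrite comp_poly2_eq0.
have hd1 : (pc \Po r)^`() = z *: (pc^`() \Po r) by exact: comp_deriv.
have hd2 : (pc \Po r)^`()^`() = z *: (z *: (pc^`()^`() \Po r)).
  by rewrite comp_deriv derivZ comp_deriv.
have e0 : (0 : R)%:C = 0 by [].
case: (ltgtP be 0) => hbe; first lra.
- set D := a ^+ 2 - 4%:R * be.
  have hD : 0 <= D by rewrite /D; lra.
  set s := Num.sqrt D.
  have hs0 : 0 <= s := sqrtr_ge0 D.
  have hs2 : s ^+ 2 = D := sqr_sqrtr hD.
  have hsa : s < a by rewrite /D in hs2; nra.
  exists ((a + s) / 2%:R), ((a - s) / 2%:R).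
  split; first lra. split; first lra.
  split; first lra.
  split.
    have -> : (a + s) / 2%:R * ((a - s) / 2%:R) = (a ^+ 2 - s ^+ 2) / 4%:R.
      rewrite mulrACA -invfM -natrM; congr (_ / _); ring.
    rewrite hs2 /D; lra.
  apply: nz_step; [apply: nz_step => //|]; apply: c_nz; apply/eqP; lra.
- case: (ltgtP a 0) => ha'; first lra.
  + exists a, 0; split => //; split => //; split; first by rewrite addr0.
    split; first by rewrite mulr0 hbe.
    cbv zeta; rewrite e0 scale0r addr0; apply: nz_step; last by apply: c_nz; apply/eqP; lra.
    rewrite hd1 scaler_eq0 negb_or hz0 comp_poly2_eq0 // mapC_deriv mapC_eq0.
    apply: contraNneq hq => e; rewrite /q e hbe !deriv0 !mulr0 !scaler0 !scale0r !addr0.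
    by rewrite eqxx.
  + exists 0, 0; split => //; split => //; split; first by rewrite addr0.
    split; first by rewrite mulr0 hbe.
    cbv zeta; rewrite e0 !scale0r !addr0 hd2 !scaler_eq0 !negb_or hz0 comp_poly2_eq0 //.
    rewrite !mapC_deriv mapC_eq0.
    apply: contraNneq hq => e; rewrite /q e hbe ha' mulr0 !scale0r !addr0.
    by rewrite eqxx.
Qed.


Lemma cz (w : C) : cRe w = 0 -> cIm w = 0 -> w = 0.
Proof. by case: w => x y /= -> ->. Qed.

Lemma quad_root (A B Cc : R) : A != 0 -> B ^+ 2 < 4%:R * A * Cc ->
  exists z : C, A%:C * z ^+ 2 + B%:C * z + Cc%:C = 0 /\ cIm z != 0.
Proof.
move=> hA hlt.
set D := 4%:R * A * Cc - B ^+ 2.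
have hD : 0 < D by rewrite /D; lra.
set s := Num.sqrt D.
have hs : 0 < s by rewrite sqrtr_gt0.
have hs2 : s ^+ 2 = D by rewrite sqr_sqrtr // ltW.
have h2 : (2%:R : R) != 0 by rewrite pnatr_eq0.
exists ((- B / (2%:R * A)) +i* (s / (2%:R * A))); split.
  apply: cz => /=.
    have e : s / (2%:R * A) * (s / (2%:R * A)) = D / (4%:R * A ^+ 2).
      by rewrite -hs2; field.
    by rewrite e /D; field.
  by field.
rewrite /= mulf_neq0 // ?invr_eq0 ?mulf_neq0 //; lra.
Qed.

Lemma quad_test (s : {poly R}) (A B Cc : R) : s != 0 ->
  only_real_zeros (s * (A *: 'X^2 + B *: 'X + Cc%:P)) -> 4%:R * A * Cc <= B ^+ 2.
Proof.
move=> hs hp; rewrite leNgt; apply/negP => hlt.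
have hA : A != 0.
  by apply/eqP => e; move: hlt; rewrite e mulr0 mul0r; have := sqr_ge0 B; lra.
have [z [hz hy]] := @quad_root A B Cc hA hlt.
case: hp => [e|hp].
  move: e => /eqP; rewrite mulf_eq0 (negbTE hs) /= => /eqP e2.
  have := congr1 (fun p : {poly R} => p`_2) e2.
  rewrite !coefD !coefZ coefXn coefX coefC /= mulr1 mulr0 addr0 addr0 coef0 => e3.
  by move: hA; rewrite e3 eqxx.
have : cIm z = 0; last by move=> e; move: hy; rewrite e eqxx.
apply/Im0; apply: hp.
have -> : (fun x : R => x%:C) = real_complex R by [].
rewrite /root rmorphM hornerM /= !rmorphD /= !map_polyZ /= map_polyXn map_polyX map_polyC.
rewrite /= !hornerE.
rewrite (_ : A%:C * z * z + B%:C * z + Cc%:C = 0) ?mulr0 //.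
by rewrite -hz expr2 mulrA.
Qed.


Lemma nonreal_contra (q : {poly R}) (z : C) : only_real_zeros q -> q != 0 ->
  (map_poly (fun x : R => x%:C) q).[z] = 0 -> cIm z != 0 -> False.
Proof.
case=> [->|hq]; first by rewrite eqxx.
move=> _ hz; have : cIm z = 0 by apply/Im0; apply: hq; rewrite /root hz.
by move=> ->; rewrite eqxx.
Qed.

Lemma orz_XaddC (m : nat) : only_real_zeros (('X + 1) ^+ m).
Proof.
right => z.
have -> : (fun x : R => x%:C) = real_complex R by [].
rewrite /root rmorphXn /= rmorphD /= map_polyX rmorph1 !hornerE.
move=> h; have : z + 1 == 0.
  by move: h; rewrite expf_eq0; case/andP => _ ->.
move=> /eqP e; apply/Im0; have -> : z = - 1 by apply/eqP; rewrite -subr_eq0 opprK e.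
by rewrite /= oppr0.
Qed.

Lemma d1X (m : nat) : (('X + 1) ^+ m.+1 : {poly C})^`() = ('X + 1) ^+ m *+ m.+1.
Proof. by rewrite deriv_exp derivD derivX derivC addr0 mul1r. Qed.

Lemma jensen_test (al be : R) (m : nat) :
  classical_multiplier_sequence (fun k : nat => k%:R ^+ 2 + al * k%:R + be) ->
  4%:R * ((m.+2)%:R * (m.+1)%:R + (al + 1) * (m.+2)%:R + be) * be <=
  ((al + 1) * (m.+2)%:R + 2%:R * be) ^+ 2.
Proof.
move=> hms; rewrite leNgt; apply/negP => hlt.
set A := _ + _ + be in hlt; set B := _ + 2%:R * be in hlt.
have hA : A != 0.
  by apply/eqP => e; move: hlt; rewrite e mulr0 mul0r; have := sqr_ge0 B; lra.
have hbe : be != 0.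
  by apply/eqP => e; move: hlt; rewrite e mulr0; have := sqr_ge0 B; lra.
have [z [hz hy]] := @quad_root A B be hA hlt.
have := hms _ (orz_XaddC m.+2); rewrite am_formula => hq.
apply: (@nonreal_contra _ z hq); last exact: hy.
  apply/eqP => e; have := congr1 (horner^~ 0) e.
  rewrite !hornerD !hornerZ [((_ + _) ^+ _).[0]]horner_exp !hornerM !hornerX.
  rewrite !mul0r !mulr0 !add0r hornerD hornerX hornerC add0r expr1n mulr1 horner0.
  by move=> e2; move: hbe; rewrite e2 eqxx.
rewrite map_eval.
have -> : (fun x : R => x%:C) = real_complex R by [].
rewrite rmorphXn /= rmorphD /= map_polyX rmorph1 d1X derivMn d1X.
rewrite !hornerMn !horner_exp hornerD hornerX hornerC.
rewrite -[RHS](mulr0 ((z + 1) ^+ m)) -hz /A /B.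
rewrite !rmorphD !rmorphM !rmorph_nat /= !exprS.
ring.
Qed.

Lemma sq1_real (z : C) : z * z = 1 -> cIm z = 0.
Proof.
case: z => x y [e1 e2] /=.
have hxy : x * y = 0 by lra.
have : y ^+ 2 * (y ^+ 2 + 1) = 0 by nra.
move/eqP; rewrite mulf_eq0 => /orP [/eqP h|/eqP h].
  by move/eqP: h; rewrite sqrf_eq0 => /eqP.
by have := sqr_ge0 y; lra.
Qed.

Lemma orz_test (k : nat) : only_real_zeros ('X^k * ('X^2 - 1)).
Proof.
right => z.
have -> : (fun x : R => x%:C) = real_complex R by [].
rewrite /root rmorphM rmorphB /= !map_polyXn rmorph1 !hornerE mulf_eq0 => /orP [h|h].
  have : z == 0 by move: h; rewrite expf_eq0; case/andP => _ ->.
  by move/eqP => ->; apply/Im0.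
apply/Im0; apply: sq1_real; apply/eqP; rewrite -subr_eq0 -expr2; exact: h.
Qed.

Lemma sign_test (al be : R) (k : nat) :
  classical_multiplier_sequence (fun k : nat => k%:R ^+ 2 + al * k%:R + be) ->
  k%:R ^+ 2 + al * k%:R + be < 0 -> 0 < k.+2%:R ^+ 2 + al * k.+2%:R + be -> False.
Proof.
set f := fun k : nat => _.
move=> hms h1 h2.
have := hms _ (orz_test k).
have -> : apply_mult f ('X^k * ('X^2 - 1)) =
    'X^k * (f k.+2 *: 'X^2 + 0 *: 'X + (- f k)%:P).
  apply/polyP => j; rewrite coef_am !coefXnM.
  case: ltnP => hj; first by rewrite mul0r.
  move: (subn j k) (subnKC hj) => i <-.
  rewrite coefB coefXn coef1 !coefD !coefZ coefXn coefX coefC.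
  case: i => [|[|[|i]]] /=; rewrite ?addn0 ?addn2; ring.
move/quad_test => /(_ (monic_neq0 (monicXn _ _))).
rewrite /f; nra.
Qed.

Lemma second_diff (al be : R) (n : nat) :
  n.+2%:R ^+ 2 + al * n.+2%:R + be =
  2%:R * (n.+1%:R ^+ 2 + al * n.+1%:R + be) - (n%:R ^+ 2 + al * n%:R + be) + 2%:R.
Proof. ring. Qed.

Lemma find_change_d (al be : R) (d : nat) : forall k : nat,
  k%:R ^+ 2 + al * k%:R + be < 0 -> 0 <= (k + d)%:R ^+ 2 + al * (k + d)%:R + be ->
  exists k', k'%:R ^+ 2 + al * k'%:R + be < 0 /\ 0 < k'.+2%:R ^+ 2 + al * k'.+2%:R + be.
Proof.
elim: d => [|d IH] k h1 h2; first by move: h2; rewrite addn0; lra.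
case: (ltrP (k.+1%:R ^+ 2 + al * k.+1%:R + be) 0) => h3.
  by apply: (IH k.+1) => //; rewrite addSnnS.
exists k; split => //; rewrite second_diff; lra.
Qed.

Lemma f_big (al be : R) (m : nat) : `|al| + `|be| + 1 <= m%:R ->
  0 <= m%:R ^+ 2 + al * m%:R + be.
Proof.
move=> hm; have h0 : 0 <= (m%:R : R) by [].
have h1 : - `|al| <= al by rewrite lerNnormlW.
have h2 : - `|be| <= be by rewrite lerNnormlW.
have h3 : 0 <= `|al| by [].
have h4 : 0 <= `|be| by [].
nra.
Qed.

Lemma find_change (al be : R) (k0 : nat) :
  k0%:R ^+ 2 + al * k0%:R + be < 0 ->
  exists k', k'%:R ^+ 2 + al * k'%:R + be < 0 /\ 0 < k'.+2%:R ^+ 2 + al * k'.+2%:R + be.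
Proof.
move=> h; set X := `|al| + `|be| + 1.
have hX : 0 <= X by rewrite /X; have := normr_ge0 al; have := normr_ge0 be; lra.
apply: (@find_change_d al be (Num.truncn X).+1 k0) => //.
apply: f_big; rewrite natrD -/X.
have := truncnS_gt X; have : 0 <= (k0%:R : R) by []; lra.
Qed.


End Helpers.

Theorem proposition4p4 (alpha beta : R) :
  classical_multiplier_sequence (fun k : nat => k%:R ^+ 2 + alpha * k%:R + beta)
  <-> (-1 <= alpha /\ 0 <= beta /\ beta <= (alpha + 1) ^+ 2 / 4%:R).
Proof.
split.
- move=> hms.
  have hb : 0 <= beta.
    rewrite leNgt; apply/negP => hlt.
    have h0 : (0%:R : R) ^+ 2 + alpha * 0%:R + beta < 0.
      by rewrite mulr0n; lra.
    have [k [h1 h2]] := @find_change alpha beta 0 h0.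
    exact: (@sign_test alpha beta _ hms h1 h2).
  have hd : 4%:R * beta <= (alpha + 1) ^+ 2.
    rewrite leNgt; apply/negP => hlt.
    set e := 4%:R * beta - (alpha + 1) ^+ 2.
    have he : 0 < e by rewrite /e; lra.
    set m := Num.truncn (4%:R * beta / e).
    have hm : 4%:R * beta / e < m.+1%:R by exact: truncnS_gt.
    have hn : 4%:R * beta < m.+2%:R * e.
      have : 4%:R * beta < m.+1%:R * e by rewrite -ltr_pdivrMr.
      have : m.+1%:R * e <= m.+2%:R * e by rewrite ler_pM2r // ler_nat.
      lra.
    have := @jensen_test alpha beta m hms.
    have hn0 : (0 : R) < m.+2%:R by [].
    rewrite /e in hn.
    nra.
  have ha : -1 <= alpha.
    rewrite leNgt; apply/negP => hlt.
    set t := - alpha / 2%:R + 2%:R^-1.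
    have ht : 0 <= t by rewrite /t; lra.
    have /andP [hk1 hk2] := truncn_itv ht.
    set k := Num.truncn t in hk1 hk2.
    have hf : k%:R ^+ 2 + alpha * k%:R + beta < 0.
      rewrite /t in hk1 hk2; nra.
    have [k' [h1 h2]] := @find_change alpha beta k hf.
    exact: (@sign_test alpha beta _ hms h1 h2).
  split => //; split => //.
  rewrite ler_pdivlMr ?ltr0n //; lra.
- case=> ha [hb hd] p hp.
  rewrite am_formula; apply: if_dir => //; first lra.
  by move: hd; rewrite ler_pdivlMr ?ltr0n //; lra.
Qed.
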